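(* For every partition $\lambda$, the dual equivalence graph $\mathsf{DE}(\lambda)$ is a subgraph of the crystal skeleton $\mathsf{CS}(\lambda)$, when edge labels and edge directions are disregarded.
   Context: French notation for tableaux; $|\lambda|=N$; $\mathsf{SYT}(\lambda)$ = standard Young tableaux of shape $\lambda$; $\mathsf{SSYT}(\lambda)_n$ = semistandard tableaux with entries in $[n]$. The reading word $\mathsf{row}(b)$ reads rows left to right from the top row down to the bottom row. The standardization $\mathsf{std}(b)$ replaces the $a_j$ entries equal to $j$, in reading order, by $a_1+\dots+a_{j-1}+1,\dots,a_1+\dots+a_j$. Crystal operators on $B(\lambda)_n=\mathsf{SSYT}(\lambda)_n$: in the subword of $\mathsf{row}(b)$ of letters $i,i+1$, bracket each $i+1$ with an unbracketed $i$ to its right (parenthesis matching, $i+1$ opening); the unbracketed letters form $i^r(i+1)^s$; $f_i$ changes the rightmost unbracketed $i$ to $i+1$ ($\emptyset$ if $r=0$). Fix $n\ge N$; for $T\in\mathsf{SYT}(\lambda)$ let $Q_T=\{b:\mathsf{std}(b)=T\}$. The crystal skeleton $\mathsf{CS}(\lambda)$ is the directed graph on $\mathsf{SYT}(\lambda)$ with an edge $T\to T'$ ($T\neq T'$) whenever $f_i(b)=b'$ for some $b\in Q_T$, $b'\in Q_{T'}$, $i$. The dual equivalence graph $\mathsf{DE}(\lambda)$ has vertex set $\mathsf{SYT}(\lambda)$ and an edge between $T$ and $T'$ whenever $T'=D_i(T)$ for some $1<i<N$, where $D_i$ acts on the permutation $\mathsf{row}(T)$ as follows: if the letters $i-1,i,i+1$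 occur in the relative order $i,\,i+1,\,i-1$ it swaps them to the order $i-1,\,i+1,\,i$ (and conversely), and if they occur in the order $i,\,i-1,\,i+1$ it swaps to $i+1,\,i-1,\,i$ (and conversely), i.e. $D_i$ interchanges $i$ with whichever of $i\pm1$ is farther from it in position-order as listed; $D_i$ is undefined for the other relative orders. (Explicitly: $\ldots i\ldots i{+}1\ldots i{-}1\ldots \leftrightarrow \ldots i{-}1\ldots i{+}1\ldots i\ldots$ and $\ldots i\ldots i{-}1\ldots i{+}1\ldots\leftrightarrow\ldots i{+}1\ldots i{-}1\ldots i\ldots$.) This preserves descents, so it defines an operation on standard tableaux via reading words. *)

(* Defs.v *)
From mathcomp Require Import all_boot.
Set Implicit Arguments. Unset Strict Implicit. Unset Printing Implicit Defensive.

(* Tableaux in French notation: a tableau is the list of its rows, row 0 being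
   the bottom (longest) row; row r+1 sits on top of row r. *)
Definition tableau := seq (seq nat).

Definition shape (t : tableau) : seq nat := map size t.

Definition is_partition (lam : seq nat) : bool :=
  sorted geq lam && all (fun k => 0 < k) lam.

Definition is_SSYT (n : nat) (lam : seq nat) (t : tableau) : Prop :=
  [/\ shape t = lam,
      all (fun r => all (fun x => (0 < x) && (x <= n)) r) t,
      all (sorted leq) t &
      forall r j, j < size (nth [::] t r.+1) ->
        nth 0 (nth [::] t r) j < nth 0 (nth [::] t r.+1) j].

Definition rowword (t : tableau) : seq nat := flatten (rev t).

Definition fill (lam : seq nat) (w : seq nat) : tableau :=
  rev (reshape (rev lam) w).

Definition is_SYT (lam : seq nat) (T : tableau) : Prop :=
  is_SSYT (sumn lam) lam T /\ perm_eq (rowword T) (iota 1 (sumn lam)).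

(* standardization of a word: the j's, read in order, receive the values
   a_1+..+a_{j-1}+1, ..., a_1+..+a_j *)
Definition std_word (w : seq nat) : seq nat :=
  mkseq (fun p => (count (fun x => x < nth 0 w p) w
                   + count (pred1 (nth 0 w p)) (take p w)).+1) (size w).

Definition std (b : tableau) : tableau := fill (shape b) (std_word (rowword b)).

(* position of the rightmost unbracketed i in w (bracketing each i+1 with an
   unbracketed i to its right); k = current position, op = number of
   currently unbracketed i+1's *)
Fixpoint fpos (i : nat) (w : seq nat) (k op : nat) (best : option nat)
  : option nat :=
  match w with
  | [::] => best
  | a :: w' =>
      if a == i.+1 then fpos i w' k.+1 op.+1 best
      else if a == i then
        (if op is op'.+1 then fpos i w' k.+1 op' best
         else fpos i w' k.+1 0 (Some k))
      else fpos i w' k.+1 op best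
  end.

Definition f_word (i : nat) (w : seq nat) : option (seq nat) :=
  if fpos i w 0 0 None is Some p then Some (set_nth 0 w p i.+1) else None.

(* crystal operator f_i on tableaux (None plays the role of the empty set) *)
Definition f_op (i : nat) (b : tableau) : option tableau :=
  omap (fill (shape b)) (f_word i (rowword b)).

Definition CS_edge (n : nat) (lam : seq nat) (T T' : tableau) : Prop :=
  T <> T' /\
  exists i b b', [/\ 1 <= i < n, is_SSYT n lam b, is_SSYT n lam b' &
                     [/\ std b = T, std b' = T' & f_op i b = Some b']].

Definition swapv (a b : nat) (w : seq nat) : seq nat :=
  map (fun x => if x == a then b else if x == b then a else x) w.

Definition D_word (i : nat) (w : seq nat) : option (seq nat) :=
  let pm := index i.-1 w in let p := index i w in let pp := index i.+1 w in
  if ((p < pp) && (pp < pm)) || ((pm < pp) && (pp < p)) then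
    Some (swapv i i.-1 w)
  else if ((p < pm) && (pm < pp)) || ((pp < pm) && (pm < p)) then
    Some (swapv i i.+1 w)
  else None.

Definition D_tab (i : nat) (T : tableau) : option tableau :=
  omap (fill (shape T)) (D_word i (rowword T)).

Definition DE_edge (lam : seq nat) (T T' : tableau) : Prop :=
  exists i, 1 < i < sumn lam /\ D_tab i T = Some T'.

(* Main.v *)
Require Import Defs.
From mathcomp Require Import all_boot zify.
Set Implicit Arguments. Unset Strict Implicit. Unset Printing Implicit Defensive.

Definition mg (j x : nat) := if x <= j then x else x.-1.

Lemma rowword_map f (T : tableau) : rowword (map (map f) T) = map f (rowword T).
Proof. by rewrite /rowword -map_rev map_flatten. Qed.

Lemma shape_map f (T : tableau) : Defs.shape (map (map f) T) = Defs.shape T.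
Proof. by rewrite /Defs.shape -map_comp; apply: eq_map => r /=; rewrite size_map. Qed.

Lemma fill_rowword (T : tableau) : fill (Defs.shape T) (rowword T) = T.
Proof. by rewrite /fill /Defs.shape /rowword -map_rev (flattenK (rev T)) revK. Qed.

Lemma rowword_fill lam w : size w = sumn lam -> rowword (fill lam w) = w.
Proof. by move=> h; rewrite /rowword /fill revK reshapeKr // h sumn_rev. Qed.

Lemma nth_map0 (A B : Type) (f : A -> B) x0 y0 s i :
  f x0 = y0 -> nth y0 (map f s) i = f (nth x0 s i).
Proof.
move=> <-; case: (ltnP i (size s)) => h; first by rewrite (nth_map x0).
by rewrite !nth_default ?size_map.
Qed.

Lemma notin_uniq (x : nat) P S : uniq (P ++ S) -> x \in S -> x \notin P.
Proof. by rewrite cat_uniq => /and3P [_ /hasPn H _] xS; apply: H. Qed.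

Lemma rowword_split (T : tableau) r : r.+1 < size T ->
  exists P Q, rowword T = P ++ nth [::] T r.+1 ++ nth [::] T r ++ Q.
Proof.
move=> h; exists (flatten (rev (drop r.+2 T))), (flatten (rev (take r T))).
rewrite /rowword -{1}(cat_take_drop r T) (drop_nth [::]) ?(ltnW h) //.
rewrite (drop_nth [::] h) rev_cat !rev_cons -!cats1 flatten_cat !flatten_cat /=.
by rewrite !cats0 !catA.
Qed.

Lemma col_index (T : tableau) r c : uniq (rowword T) ->
  c < size (nth [::] T r.+1) -> 0 < nth 0 (nth [::] T r) c ->
  index (nth 0 (nth [::] T r.+1) c) (rowword T) < index (nth 0 (nth [::] T r) c) (rowword T).
Proof.
move=> u h1 h2.
have hr : r.+1 < size T.
  by case: ltnP => // hh; move: h1; rewrite nth_default.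
have h3 : c < size (nth [::] T r).
  by case: ltnP => // hh; move: h2; rewrite nth_default.
have xin := mem_nth 0 h1; have yin := mem_nth 0 h3.
move: u; case: (rowword_split hr) => P [Q ->] u.
set x := nth 0 _ c in xin *; set y := nth 0 (nth [::] T r) c in yin *.
set R1 := nth [::] T r.+1 in xin u *; set R0 := nth [::] T r in yin u *.
have xP : x \notin P by apply: (notin_uniq u); rewrite mem_cat xin.
have yP : y \notin P by apply: (notin_uniq u); rewrite !mem_cat yin orbT.
have u2 : uniq (R1 ++ R0 ++ Q) by move: u; rewrite cat_uniq => /and3P [].
have yR : y \notin R1 by apply: (notin_uniq u2); rewrite mem_cat yin.
rewrite !index_cat (negbTE xP) (negbTE yP) xin (negbTE yR).
have := index_mem x R1; rewrite xin; lia.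
Qed.

Lemma mg_lt j x y : (mg j y < mg j x) = (y < (if x == j.+1 then j else x)).
Proof. rewrite /mg; case: (eqVneq x j.+1) => [->|ne]; [rewrite ltnn /=; case: (leqP y j) => /=; lia|]. case: (leqP y j); case: (leqP x j) => /=; lia. Qed.

Lemma count_lt_iota m a k : count (fun y => y < m) (iota a k) = minn (m - a) k.
Proof. elim: k a => [|k IH] a /=; first by rewrite minn0. rewrite IH; lia. Qed.

Lemma count_or2 (u v : nat) s : u != v ->
  count (fun y => (y == u) || (y == v)) s = count_mem u s + count_mem v s.
Proof.
move=> uv; elim: s => //= z s ->.
case: (eqVneq z u) => [zu|zu]; case: (eqVneq z v) => [zv|zv] /=; lia.
Qed.

Lemma std_merge N w j : perm_eq w (iota 1 N) -> 1 <= j < N -> index j w < index j.+1 w ->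
  std_word (map (mg j) w) = w.
Proof.
move=> pw hj hidx.
have uw : uniq w by rewrite (perm_uniq pw) iota_uniq.
have memw : forall x, (x \in w) = (0 < x <= N).
  by move=> x; rewrite (perm_mem pw) mem_iota; lia.
have jw : j \in w by rewrite memw; lia.
apply: (@eq_from_nth _ 0); first by rewrite size_mkseq size_map.
move=> p; rewrite size_mkseq size_map => hp.
rewrite nth_mkseq ?size_map // (nth_map 0) //.
set x := nth 0 w p.
have xw : x \in w := mem_nth 0 hp.
have px : index x w = p := index_uniq 0 hp uw.
have xN : 0 < x <= N by rewrite -memw.
rewrite count_map -map_take count_map.
rewrite (eq_count (a2 := fun y => y < (if x == j.+1 then j else x))); last first.
  by move=> y /=; rewrite mg_lt.
rewrite (permP pw) count_lt_iota.
have ut : uniq (take p w) by apply: take_uniq.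
have xt : x \notin take p w by rewrite (in_take _ xw) px ltnn.
case: (eqVneq x j.+1) => [xj|xj].
  rewrite (eq_count (a2 := fun y => (y == j.+1) || (y == j))); last first.
    by move=> y /=; rewrite /mg xj ltnn; case: (leqP y j) => /=; lia.
  rewrite count_or2; last lia.
  rewrite !count_uniq_mem // -xj (negbTE xt) (in_take _ jw) -px xj hidx /=. lia.
case: (eqVneq x j) => [xj'|xj'].
  rewrite (eq_count (a2 := fun y => (y == j) || (y == j.+1))); last first.
    by move=> y /=; rewrite /mg xj' leqnn; case: (leqP y j) => /=; lia.
  rewrite count_or2; last lia.
  have j1w : j.+1 \in w by rewrite memw; lia.
  have pj : p = index j w by rewrite -px xj'.
  rewrite !count_uniq_mem // (in_take _ j1w) (in_take _ jw) pj ltnn.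
  have -> : (index j.+1 w < index j w) = false by lia.
  lia.
rewrite (eq_count (a2 := pred1 x)); last first.
  by move=> y /=; rewrite /mg; case: (leqP y j); case: (leqP x j) => /=; lia.
rewrite count_uniq_mem // (negbTE xt). lia.
Qed.

Lemma merge_ok lam n T j : sumn lam <= n -> is_SYT lam T -> 1 <= j < sumn lam ->
  index j (rowword T) < index j.+1 (rowword T) ->
  is_SSYT n lam (map (map (mg j)) T) /\ std (map (map (mg j)) T) = T.
Proof.
move=> hn [[sh ent srt col] pw] hj hidx.
have uw : uniq (rowword T) by rewrite (perm_uniq pw) iota_uniq.
split; last first.
  by rewrite /std shape_map rowword_map (std_merge pw hj hidx) fill_rowword.
split.
- by rewrite shape_map.
- rewrite all_map; apply/allP => r rT /=; rewrite all_map; apply/allP => x xr /=.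
  have := allP (allP ent r rT) x xr; rewrite /mg; case: (leqP x j) => /=; lia.
- rewrite all_map; apply/allP => r rT /=.
  apply: homo_sorted; last exact: (allP srt r rT).
  by move=> x y /=; rewrite /mg; case: (leqP x j); case: (leqP y j); lia.
- move=> r c.
  rewrite !(@nth_map0 _ _ (map (mg j)) [::] [::]) // size_map => hc.
  rewrite !(@nth_map0 _ _ (mg j) 0 0) //.
  have := col r c hc.
  set a := nth 0 (nth [::] T r) c; set b := nth 0 (nth [::] T r.+1) c => ab.
  have [[ea eb]|ne] : (a = j /\ b = j.+1) \/ ~ (a = j /\ b = j.+1) by lia.
    have := col_index uw hc; rewrite -/a -/b ea eb => H.
    have : 0 < j by lia. move=> /H; lia.
  by rewrite /mg; case: (leqP a j); case: (leqP b j); lia.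
Qed.

Definition avoid k (X : seq nat) := all (fun y => (y < k) || (k.+2 < y)) X.

Lemma fpos_skip k X w : all (fun y => (y != k) && (y != k.+1)) X ->
  forall pos op best, fpos k (X ++ w) pos op best = fpos k w (pos + size X) op best.
Proof.
elim: X => [|a X IH] /=; first by move=> _ *; rewrite addn0.
move=> /andP [/andP [h1 h2] hX] pos op best.
by rewrite (negbTE h1) (negbTE h2) IH // addSnnS.
Qed.

Lemma fpos_end k X : all (fun y => (y != k) && (y != k.+1)) X ->
  forall pos op best, fpos k X pos op best = best.
Proof. by move=> h pos op best; rewrite -[X]cats0 fpos_skip. Qed.

Lemma set_nth_at (X R : seq nat) y z : set_nth 0 (X ++ y :: R) (size X) z = X ++ z :: R.
Proof. by elim: X => //= a X ->. Qed.

Lemma avoid_map k X : avoid k X ->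
  all (fun y => (y != k) && (y != k.+1)) (map (mg k) X).
Proof.
move=> h; apply/allP => y /mapP [z zX ->]; have := allP h z zX.
rewrite /mg; case: (leqP z k) => /=; lia.
Qed.

Lemma avoid_mg k X : avoid k X -> map (mg k.+1) X = map (mg k) X.
Proof.
move=> h; apply/eq_in_map => z zX; have := allP h z zX.
rewrite /mg; case: (leqP z k); case: (leqP z k.+1) => /=; lia.
Qed.

Lemma mg1 k : mg k k = k. Proof. by rewrite /mg leqnn. Qed.
Lemma mg2 k : mg k k.+1 = k. Proof. by rewrite /mg ltnn. Qed.
Lemma mg3 k : mg k k.+2 = k.+1. Proof. by rewrite /mg; case: leqP => //; lia. Qed.
Lemma mg4 k : mg k.+1 k.+1 = k.+1. Proof. by rewrite /mg leqnn. Qed.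
Lemma mg5 k : mg k.+1 k.+2 = k.+1. Proof. by rewrite /mg ltnn. Qed.
Lemma mg6 k : mg k.+1 k = k. Proof. by rewrite /mg leqnSn. Qed.

Lemma fword_case1 k A B C D : 0 < k -> avoid k A -> avoid k B -> avoid k C -> avoid k D ->
  f_word k (map (mg k) (A ++ k :: B ++ k.+2 :: C ++ k.+1 :: D)) =
  Some (map (mg k.+1) (A ++ k.+1 :: B ++ k.+2 :: C ++ k :: D)).
Proof.
move=> k0 hA hB hC hD.
rewrite !(map_cat, map_cons).
rewrite mg1 mg2 mg3 mg4 mg5 mg6.
rewrite !avoid_mg // /f_word.
have e1 : (k == k.+1) = false by lia.
have e2 : (k.+1 == k) = false by lia.
rewrite fpos_skip ?avoid_map //= e1 eqxx fpos_skip ?avoid_map //= eqxx.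
rewrite fpos_skip ?avoid_map //= e1 eqxx fpos_end ?avoid_map // add0n.
by rewrite set_nth_at.
Qed.

Lemma fword_case2 k A B C D : 0 < k -> avoid k A -> avoid k B -> avoid k C -> avoid k D ->
  f_word k (map (mg k) (A ++ k.+2 :: B ++ k :: C ++ k.+1 :: D)) =
  Some (map (mg k.+1) (A ++ k.+1 :: B ++ k :: C ++ k.+2 :: D)).
Proof.
move=> k0 hA hB hC hD.
rewrite !(map_cat, map_cons).
rewrite mg1 mg2 mg3 mg4 mg5 mg6.
rewrite !avoid_mg // /f_word.
have e1 : (k == k.+1) = false by lia.
have e2 : (k.+1 == k) = false by lia.
rewrite fpos_skip ?avoid_map //= eqxx fpos_skip ?avoid_map //= e1 eqxx.
rewrite fpos_skip ?avoid_map //= e1 eqxx fpos_end ?avoid_map // add0n.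
set X := [seq mg k i | i <- A] ++ k.+1 :: [seq mg k i | i <- B] ++ k :: [seq mg k i | i <- C].
have -> : forall R, [seq mg k i | i <- A] ++ k.+1 :: [seq mg k i | i <- B] ++ k :: [seq mg k i | i <- C] ++ R = X ++ R.
  by move=> R; rewrite /X -catA /= -catA.
have -> : ((size [seq mg k i | i <- A]).+1 + size [seq mg k i | i <- B]).+1 +
        size [seq mg k i | i <- C] = size X.
  by rewrite /X !size_cat /= !size_cat /=; lia.
by rewrite set_nth_at /X -catA /= -catA.
Qed.

Lemma cnt_pos (z : nat) s : z \in s -> 0 < count_mem z s.
Proof. by rewrite -has_pred1 has_count. Qed.

Lemma uniq_avoid k A B C D a b c : uniq (A ++ a :: B ++ b :: C ++ c :: D) ->
  (forall z, z != a -> z != b -> z != c -> (z < k) || (k.+2 < z)) ->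
  [/\ avoid k A, avoid k B, avoid k C & avoid k D].
Proof.
move=> u H.
have cz : forall z, count_mem z (A ++ a :: B ++ b :: C ++ c :: D) <= 1.
  by move=> z; rewrite count_uniq_mem //; case: (_ \in _).
have gen : forall X, (forall z, z \in X -> count_mem z X + (a == z) + (b == z) + (c == z) <= 1) -> avoid k X.
  move=> X HX; apply/allP => z zX; have := HX z zX; have := cnt_pos zX.
  move=> h1 h2; apply: H; apply/negP => /eqP e; subst; rewrite eqxx in h2; lia.
split; apply: gen => z _; have := cz z; rewrite !count_cat /= !count_cat /= !count_cat /=; lia.
Qed.

Lemma avoid_all k X x y : avoid k X -> k <= x <= k.+2 -> k <= y <= k.+2 ->
  all (fun z => (z != x) && (z != y)) X.
Proof. by move=> h hx hy; apply/allP => z zX; have := allP h z zX; lia. Qed.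

Lemma idx_before (x y : nat) (P Q : seq nat) : all (fun z => (z != x) && (z != y)) P -> y != x ->
  index x (P ++ x :: Q) < index y (P ++ x :: Q).
Proof.
move=> h yx.
have xP : x \notin P by apply/negP => xP; have := allP h x xP; rewrite eqxx.
have yP : y \notin P by apply/negP => yP; have := allP h y yP; rewrite eqxx andbF.
rewrite !index_cat (negbTE xP) (negbTE yP) /= eqxx eq_sym (negbTE yx); lia.
Qed.

Lemma key lam n k T S A B C D : is_SYT lam T -> is_SYT lam S -> sumn lam <= n ->
  0 < k -> k.+2 <= sumn lam ->
  avoid k A -> avoid k B -> avoid k C -> avoid k D ->
  (rowword T = A ++ k :: B ++ k.+2 :: C ++ k.+1 :: D /\
   rowword S = A ++ k.+1 :: B ++ k.+2 :: C ++ k :: D) \/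
  (rowword T = A ++ k.+2 :: B ++ k :: C ++ k.+1 :: D /\
   rowword S = A ++ k.+1 :: B ++ k :: C ++ k.+2 :: D) ->
  CS_edge n lam T S.
Proof.
move=> sT sS hn k0 kN hA hB hC hD H.
have hT : index k (rowword T) < index k.+1 (rowword T).
  case: H => [[-> _]|[-> _]].
    by apply: idx_before; [apply: (avoid_all hA); lia | lia].
  rewrite (_ : A ++ k.+2 :: B ++ k :: _ = (A ++ k.+2 :: B) ++ k :: (C ++ k.+1 :: D)); last by rewrite -catA.
  apply: idx_before; last lia.
  rewrite all_cat /= (avoid_all hA) ?(avoid_all hB) //; lia.
have hS : index k.+1 (rowword S) < index k.+2 (rowword S).
  case: H => [[_ ->]|[_ ->]].
    by apply: idx_before; [apply: (avoid_all hA); lia | lia].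
  by apply: idx_before; [apply: (avoid_all hA); lia | lia].
split.
  move=> eTS; move: H; rewrite eTS => -[[-> e]|[-> e]];
  have := congr1 (nth 0 ^~ (size A)) e; rewrite /= !nth_cat ltnn subnn /=; lia.
have [s1 t1] := merge_ok hn sT (j:=k) ltac:(lia) hT.
have [s2 t2] := merge_ok hn sS (j:=k.+1) ltac:(lia) hS.
exists k, (map (map (mg k)) T), (map (map (mg k.+1)) S).
split => //; first lia.
split => //.
have shT : Defs.shape T = lam by case: sT => -[].
have shS : Defs.shape S = lam by case: sS => -[].
rewrite /f_op rowword_map shape_map shT -shS -(shape_map (mg k.+1) S).
case: H => [[eT eS]|[eT eS]]; rewrite eT ?fword_case1 ?fword_case2 // -eS /= -rowword_map;
by rewrite fill_rowword.
Qed.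

Lemma split_mem (x : nat) s : x \in s -> exists A R, s = A ++ x :: R /\ x \notin A.
Proof.
elim: s => // a s IH; rewrite inE; case: (eqVneq x a) => [-> _|ne /= /IH [A [R [-> nA]]]].
  by exists [::], s.
by exists (a :: A), R; split => //; rewrite inE negb_or nA andbT.
Qed.

Lemma after_split (A R : seq nat) a y : a \notin A -> y \in A ++ a :: R ->
  size A < index y (A ++ a :: R) -> y \in R /\ index y (A ++ a :: R) = size A + (index y R).+1.
Proof.
move=> aA; rewrite index_cat mem_cat; case: ifP => yA /=.
  have h1 : index y A < size A by rewrite index_mem.
  by move=> _ h2; exfalso; lia.
rewrite inE eq_sym; case: eqP => [e|_] /=; first by move=> _ h; exfalso; lia.
by move=> yR _.
Qed.

Lemma decomp3 (u : seq nat) a b c : a \in u -> b \in u -> c \in u ->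
  index a u < index b u -> index b u < index c u ->
  exists A B C D, u = A ++ a :: B ++ b :: C ++ c :: D.
Proof.
move=> au bu cu h1 h2.
case: (split_mem au) => A [R [eu aA]].
have ia : index a u = size A by rewrite eu index_cat (negbTE aA) /= eqxx addn0.
move: bu cu h1 h2; rewrite ia eu => bu cu h1 h2.
have [bR ib] := after_split aA bu h1.
have [cR ic] := after_split aA cu (ltn_trans h1 h2).
rewrite ib ic in h2.
case: (split_mem bR) => B [R' [eR bB]].
have ib' : index b R = size B by rewrite eR index_cat (negbTE bB) /= eqxx addn0.
move: cR h2; rewrite ib' eR => cR h2.
have h3 : size B < index c (B ++ b :: R') by move: h2; rewrite ltn_add2l ltnS.
have [cR' _] := after_split bB cR h3.
case: (split_mem cR') => C [D [eR' _]].
by exists A, B, C, D; rewrite eR'.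
Qed.

Lemma swapv_id k X a b : avoid k X -> k <= a <= k.+2 -> k <= b <= k.+2 -> swapv a b X = X.
Proof.
move=> h ha hb; apply: map_id_in => z zX; have := allP h z zX => hz.
case: (eqVneq z a) => [e|_]; first lia.
case: (eqVneq z b) => [e|_] //; lia.
Qed.

Lemma swapv_cat a b X Y : swapv a b (X ++ Y) = swapv a b X ++ swapv a b Y.
Proof. exact: map_cat. Qed.

Theorem theorem4p1 (lam : seq nat) (n : nat) :
  is_partition lam -> sumn lam <= n ->
  forall T T' : tableau, is_SYT lam T -> is_SYT lam T' ->
  DE_edge lam T T' -> CS_edge n lam T T' \/ CS_edge n lam T' T.
Proof.
move=> hp hn T T' sT sT' [i [hi]].
rewrite /D_tab; case E: (D_word i (rowword T)) => [v|] //= [eT'].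
have [[shT _ _ _] pw] := sT.
have uw : uniq (rowword T) by rewrite (perm_uniq pw) iota_uniq.
have memw : forall x, (x \in rowword T) = (0 < x <= sumn lam).
  by move=> x; rewrite (perm_mem pw) mem_iota; lia.
have sz : size (rowword T) = sumn lam by rewrite (perm_size pw) size_iota.
case: i hi E => [|k] hi E; first lia.
have k0 : 0 < k by lia.
have kN : k.+2 <= sumn lam by lia.
have sv : size v = sumn lam.
  move: E; rewrite /D_word; case: ifP => _; first by case=> <-; rewrite size_map.
  by case: ifP => _ // [<-]; rewrite size_map.
have eT'w : rowword T' = v by rewrite -eT' shT rowword_fill.
have m0 : k \in rowword T by rewrite memw; lia.
have m1 : k.+1 \in rowword T by rewrite memw; lia.
have m2 : k.+2 \in rowword T by rewrite memw; lia.
have e1 : (k == k.+1) = false by lia.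
have e2 : (k.+1 == k) = false by lia.
have e3 : (k == k.+2) = false by lia.
have e4 : (k.+2 == k) = false by lia.
have e5 : (k.+1 == k.+2) = false by lia.
have e6 : (k.+2 == k.+1) = false by lia.
have zf : forall a b c, [&& k <= a <= k.+2, k <= b <= k.+2, k <= c <= k.+2, a != b, b != c & a != c] ->
    forall z, z != a -> z != b -> z != c -> (z < k) || (k.+2 < z).
  by move=> a b c H z; lia.
have sid1 : forall X, avoid k X -> swapv k.+1 k X = X by move=> X h; rewrite (swapv_id h) //; lia.
have sid2 : forall X, avoid k X -> swapv k.+1 k.+2 X = X by move=> X h; rewrite (swapv_id h) //; lia.
move: E; rewrite /D_word /=.
case: ifP => [/orP [/andP [h1 h2] | /andP [h1 h2]] [ev] | _].
- have [A [B [C [D eu]]]] := decomp3 m1 m2 m0 h1 h2.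
  have uw' := uw; rewrite eu in uw'.
  have [hA hB hC hD] := uniq_avoid uw' (zf k.+1 k.+2 k ltac:(lia)).
  right; apply: (key sT' sT hn k0 kN hA hB hC hD); left; split; last by [].
  rewrite eT'w -ev eu /= !swapv_cat /= !swapv_cat /= !swapv_cat /=.
  rewrite (sid1 A hA) (sid1 B hB) (sid1 C hC) (sid1 D hD).
  by rewrite !eqxx ?e1 ?e2 ?e3 ?e4 ?e5 ?e6.
- have [A [B [C [D eu]]]] := decomp3 m0 m2 m1 h1 h2.
  have uw' := uw; rewrite eu in uw'.
  have [hA hB hC hD] := uniq_avoid uw' (zf k k.+2 k.+1 ltac:(lia)).
  left; apply: (key sT sT' hn k0 kN hA hB hC hD); left; split; first by [].
  rewrite eT'w -ev eu /= !swapv_cat /= !swapv_cat /= !swapv_cat /=.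
  rewrite (sid1 A hA) (sid1 B hB) (sid1 C hC) (sid1 D hD).
  by rewrite !eqxx ?e1 ?e2 ?e3 ?e4 ?e5 ?e6.
case: ifP => [/orP [/andP [h1 h2] | /andP [h1 h2]] [ev] | _ //].
- have [A [B [C [D eu]]]] := decomp3 m1 m0 m2 h1 h2.
  have uw' := uw; rewrite eu in uw'.
  have [hA hB hC hD] := uniq_avoid uw' (zf k.+1 k k.+2 ltac:(lia)).
  right; apply: (key sT' sT hn k0 kN hA hB hC hD); right; split; last by [].
  rewrite eT'w -ev eu /= !swapv_cat /= !swapv_cat /= !swapv_cat /=.
  rewrite (sid2 A hA) (sid2 B hB) (sid2 C hC) (sid2 D hD).
  by rewrite !eqxx ?e1 ?e2 ?e3 ?e4 ?e5 ?e6.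
- have [A [B [C [D eu]]]] := decomp3 m2 m0 m1 h1 h2.
  have uw' := uw; rewrite eu in uw'.
  have [hA hB hC hD] := uniq_avoid uw' (zf k.+2 k k.+1 ltac:(lia)).
  left; apply: (key sT sT' hn k0 kN hA hB hC hD); right; split; first by [].
  rewrite eT'w -ev eu /= !swapv_cat /= !swapv_cat /= !swapv_cat /=.
  rewrite (sid2 A hA) (sid2 B hB) (sid2 C hC) (sid2 D hD).
  by rewrite !eqxx ?e1 ?e2 ?e3 ?e4 ?e5 ?e6.
Qed.
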